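(* Let $b>0$ and let $x_0,x_\infty$ be as in the context. Then $x_\infty<x_0$.
   Context: Constants: $a\in\mathbb{R}$, $b>0$, $\sigma>0$, $\rho>0$, $c>0$. For $\beta<0$, let $D_\beta(x)=\frac{e^{-x^2/4}}{\Gamma(-\beta)}\int_0^\infty t^{-\beta-1}e^{-t^2/2-xt}\,dt$, and $\psi(x)=e^{\frac{(bx-a)^2}{2\sigma^2 b}}D_{-\rho/b}\big(-\frac{bx-a}{\sigma b}\sqrt{2b}\big)$, the positive strictly increasing fundamental solution of $\frac12\sigma^2u''+(a-bx)u'-\rho u=0$. Let $x_0$ be the unique solution on $(c,\infty)$ of $(x-c)\psi'(x)-\psi(x)=0$ and $x_\infty$ the unique solution on $(c,\infty)$ of $(x-c)\psi''(x)-\psi'(x)=0$ (these exist and are unique). *)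

(* Defs.v *)
From Stdlib Require Import Reals.
From Coquelicot Require Import Coquelicot.
Open Scope R_scope.

Definition Gamma_fun (s : R) : R :=
  RInt_gen (fun t => Rpower t (s - 1) * exp (- t))
           (at_right 0) (Rbar_locally p_infty).

(* Parabolic cylinder function for beta < 0:
   D_beta(x) = e^{-x^2/4}/Gamma(-beta) * int_0^oo t^{-beta-1} e^{-t^2/2 - x t} dt. *)
Definition Dpc (beta x : R) : R :=
  exp (- x ^ 2 / 4) / Gamma_fun (- beta) *
  RInt_gen (fun t => Rpower t (- beta - 1) * exp (- t ^ 2 / 2 - x * t))
           (at_right 0) (Rbar_locally p_infty).

Definition psi (a b sigma rho : R) (x : R) : R :=
  exp ((b * x - a) ^ 2 / (2 * sigma ^ 2 * b)) *
  Dpc (- rho / b) (- (b * x - a) / (sigma * b) * sqrt (2 * b)).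

Definition eq_x0 (a b sigma rho c x : R) : Prop :=
  (x - c) * Derive (psi a b sigma rho) x - psi a b sigma rho x = 0.

Definition eq_xinf (a b sigma rho c x : R) : Prop :=
  (x - c) * Derive (fun y => Derive (psi a b sigma rho) y) x
  - Derive (psi a b sigma rho) x = 0.

(* Main.v *)
Require Import Defs.
From Stdlib Require Import Reals Lra Psatz.
From Coquelicot Require Import Coquelicot.
Open Scope R_scope.
Definition fq (q X t : R) : R := exp (q * ln t) * exp (- t ^ 2 / 2 - X * t).

Lemma fq_pos q X t : 0 < fq q X t.
Proof. unfold fq. apply Rmult_lt_0_compat; apply exp_pos. Qed.

Lemma fq_succ q X t : 0 < t -> fq (q + 1) X t = t * fq q X t.
Proof.
  intros Ht. unfold fq. replace ((q+1) * ln t) with (q * ln t + ln t) by ring.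
  rewrite exp_plus, exp_ln by exact Ht. ring.
Qed.

Lemma fq_derive q X t : 0 < t ->
  is_derive (fq q X) t (fq q X t * (q / t - t - X)).
Proof.
  intros Ht. unfold fq. auto_derive.
  - exact Ht.
  - assert (E: - (t * (t * 1)) * / 2 + - (X * t) = - t ^ 2 / 2 - X * t) by field.
    rewrite E. field. lra.
Qed.

Lemma fq_cont q X t : 0 < t -> continuous (fq q X) t.
Proof.
  intros Ht. apply (ex_derive_continuous (fq q X)). exists (fq q X t * (q / t - t - X)). apply fq_derive. exact Ht.
Qed.

Lemma exp_m1_bound c : Rabs (exp c - 1) <= Rabs c * exp (Rabs c).
Proof.
  assert (H2 : exp c * exp (-c) = 1) by (rewrite <- exp_plus; replace (c + - c) with 0 by ring; apply exp_0).
  assert (H1 := exp_ineq1_le (-c)). assert (H0 := exp_ineq1_le c).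
  assert (P1 := exp_pos c). assert (P2 := exp_pos (-c)).
  destruct (Rle_or_lt 0 c) as [Hc|Hc].
  - rewrite (Rabs_pos_eq c) by lra. rewrite Rabs_pos_eq by lra. nra.
  - rewrite (Rabs_left c) by lra. rewrite Rabs_left1 by nra. nra.
Qed.

Lemma exp_m1_id_bound u : Rabs (exp u - 1 - u) <= u ^ 2 * exp (Rabs u).
Proof.
  destruct (MVT_gen (fun s => exp s - s) 0 u (fun s => exp s - 1)) as [c [Hc Heq]].
  - intros x _. auto_derive; auto. ring.
  - intros x _. apply continuity_pt_minus. apply derivable_continuous_pt, derivable_pt_exp. apply continuity_pt_id.
  - simpl in Heq. rewrite exp_0 in Heq.
    replace (exp u - 1 - u) with ((exp c - 1) * u) by lra.
    rewrite Rabs_mult.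
    assert (Hcu : Rabs c <= Rabs u).
    { unfold Rmin, Rmax in Hc. destruct (Rle_dec 0 u); unfold Rabs; repeat destruct Rcase_abs; lra. }
    assert (E1 := exp_m1_bound c).
    assert (E2 : exp (Rabs c) <= exp (Rabs u)).
    { destruct (Req_dec (Rabs c) (Rabs u)) as [E|E]; [rewrite E; lra| apply Rlt_le, exp_increasing; lra]. }
    assert (0 <= Rabs u) by apply Rabs_pos. assert (0 <= Rabs c) by apply Rabs_pos.
    assert (0 < exp (Rabs c)) by apply exp_pos.
    replace (u ^ 2) with (Rabs u * Rabs u) by (rewrite <- Rabs_mult; rewrite Rabs_pos_eq by nra; ring).
    apply Rle_trans with (Rabs c * exp (Rabs c) * Rabs u). apply Rmult_le_compat_r; auto.
    assert (Rabs c * exp (Rabs c) <= Rabs u * exp (Rabs u)) by (apply Rmult_le_compat; lra).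
    replace (Rabs u * Rabs u * exp (Rabs u)) with ((Rabs u * exp (Rabs u)) * Rabs u) by ring.
    apply Rmult_le_compat_r; lra.
Qed.
Lemma exRc (f : R -> R) a b : (forall z, Rmin a b <= z <= Rmax a b -> continuous f z) -> ex_RInt f a b.
Proof. intros H. apply (ex_RInt_continuous (V := R_CompleteNormedModule)). exact H. Qed.

Lemma RInt_dom_le s s' (f g G : R -> R) : s <= s' ->
  (forall x, s <= x <= s' -> continuous f x /\ continuous g x /\ is_derive G x (g x) /\ Rabs (f x) <= g x) ->
  Rabs (RInt f s s') <= Rabs (G s' - G s).
Proof.
  intros Hs H.
  assert (exf : ex_RInt f s s').
  { apply exRc. intros z Hz. rewrite Rmin_left, Rmax_right in Hz by lra. apply H; lra. }
  assert (Hg : is_RInt g s s' (minus (G s') (G s))).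
  { apply (is_RInt_derive (V := R_CompleteNormedModule)); intros x Hx; rewrite Rmin_left, Rmax_right in Hx by lra; apply H; lra. }
  assert (N := norm_RInt_le (V := R_NormedModule) f g s s' (RInt f s s') _ Hs (fun x Hx => proj2 (proj2 (proj2 (H x Hx)))) (RInt_correct (V := R_CompleteNormedModule) _ _ _ exf) Hg).
  change (Rabs (RInt f s s') <= G s' - G s) in N.
  apply Rle_trans with (1 := N). apply Rle_abs.
Qed.

Lemma RInt_dom s s' (f g G : R -> R) :
  (forall x, Rmin s s' <= x <= Rmax s s' -> continuous f x /\ continuous g x /\ is_derive G x (g x) /\ Rabs (f x) <= g x) ->
  Rabs (RInt f s s') <= Rabs (G s' - G s).
Proof.
  intros H. destruct (Rle_or_lt s s') as [Hs|Hs].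
  - apply (RInt_dom_le _ _ f g G); auto. intros x Hx. apply H. rewrite Rmin_left, Rmax_right; lra.
  - assert (exf : ex_RInt f s' s).
    { apply exRc. intros z Hz. apply H. rewrite Rmin_comm, Rmax_comm. exact Hz. }
    rewrite <- (opp_RInt_swap f s' s exf).
    change (Rabs (- RInt f s' s) <= Rabs (G s' - G s)).
    rewrite Rabs_Ropp, Rabs_minus_sym. apply (RInt_dom_le _ _ f g G); [lra|].
    intros x Hx. apply H. rewrite Rmin_right, Rmax_left; lra.
Qed.

Lemma ex_RInt_gen_dom (Fa Fb : (R -> Prop) -> Prop) (FFa : ProperFilter Fa) (FFb : ProperFilter Fb)
  (f g G : R -> R) (La Lb : R) :
  filter_prod Fa Fb (fun ab => fst ab < snd ab /\ forall x, fst ab <= x <= snd ab ->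
      continuous f x /\ continuous g x /\ is_derive G x (g x) /\ Rabs (f x) <= g x) ->
  filterlim G Fa (locally La) -> filterlim G Fb (locally Lb) ->
  ex_RInt_gen f Fa Fb.
Proof.
  intros Hd HLa HLb.
  assert (FP : ProperFilter (filter_prod Fa Fb)) by (apply filter_prod_proper; auto).
  destruct (proj1 (filterlim_locally_cauchy (F := filter_prod Fa Fb) (fun ab => RInt f (fst ab) (snd ab)))) as [y Hy].
  - intros eps.
    assert (e4 : 0 < eps / 4) by (destruct eps; simpl; lra).
    destruct Hd as [Qa Qb HQa HQb Hp].
    exists (fun ab => (Qa (fst ab) /\ ball La (mkposreal _ e4) (G (fst ab))) /\ (Qb (snd ab) /\ ball Lb (mkposreal _ e4) (G (snd ab)))).
    split.
    + apply (Filter_prod _ _ _ (fun a => Qa a /\ ball La (mkposreal _ e4) (G a)) (fun b => Qb b /\ ball Lb (mkposreal _ e4) (G b))).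
      * apply filter_and; auto. apply (proj1 (filterlim_locally G La) HLa).
      * apply filter_and; auto. apply (proj1 (filterlim_locally G Lb) HLb).
      * intros; simpl; auto.
    + intros [a b] [a' b'] [[Ha Ga] [Hb Gb]] [[Ha' Ga'] [Hb' Gb']]. simpl in *.
      change (Rabs (RInt f a' b' - RInt f a b) < eps).
      destruct (Hp a b Ha Hb) as [Hab Dab]. destruct (Hp a' b Ha' Hb) as [Ha'b Da'b].
      destruct (Hp a b' Ha Hb') as [Hab' Dab']. simpl in *.
      assert (ex1 : forall s s', a <= s -> s <= s' -> s' <= b -> ex_RInt f s s').
      { intros s s' H1 H2 H3. apply exRc. intros z Hz. rewrite Rmin_left, Rmax_right in Hz by lra. apply Dab; lra. }
      assert (exc : forall u v, (forall x, Rmin u v <= x <= Rmax u v -> continuous f x) -> ex_RInt f u v).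
      { intros u v Hc. apply exRc. exact Hc. }
      assert (C1 : RInt f a b = plus (RInt f a a') (RInt f a' b)).
      { symmetry. apply RInt_Chasles.
        - apply exc. intros x Hx. unfold Rmin, Rmax in Hx. destruct (Rle_dec a a'); [apply Dab|apply Da'b]; lra.
        - apply exc. intros x Hx. rewrite Rmin_left, Rmax_right in Hx by lra. apply Da'b; lra. }
      assert (C2 : RInt f a' b' = plus (RInt f a' b) (RInt f b b')).
      { symmetry. apply RInt_Chasles.
        - apply exc. intros x Hx. rewrite Rmin_left, Rmax_right in Hx by lra. apply Da'b; lra.
        - apply exc. intros x Hx. unfold Rmin, Rmax in Hx. destruct (Rle_dec b b'); [apply Dab'|apply Dab]; lra. }
      change (RInt f a b = RInt f a a' + RInt f a' b) in C1.
      change (RInt f a' b' = RInt f a' b + RInt f b b') in C2.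
      assert (B1 : Rabs (RInt f a a') <= Rabs (G a' - G a)).
      { apply (RInt_dom _ _ f g G). intros x Hx. unfold Rmin, Rmax in Hx. destruct (Rle_dec a a'); [apply Dab|apply Da'b]; lra. }
      assert (B2 : Rabs (RInt f b b') <= Rabs (G b' - G b)).
      { apply (RInt_dom _ _ f g G). intros x Hx. unfold Rmin, Rmax in Hx. destruct (Rle_dec b b'); [apply Dab'|apply Dab]; lra. }
      change (Rabs (G a - La) < eps / 4) in Ga. change (Rabs (G a' - La) < eps / 4) in Ga'.
      change (Rabs (G b - Lb) < eps / 4) in Gb. change (Rabs (G b' - Lb) < eps / 4) in Gb'.
      rewrite C1, C2. replace (RInt f a' b + RInt f b b' - (RInt f a a' + RInt f a' b)) with (RInt f b b' + - RInt f a a') by ring.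
      eapply Rle_lt_trans. apply Rabs_triang. rewrite Rabs_Ropp.
      revert B1 B2 Ga Ga' Gb Gb'. unfold Rabs; repeat destruct Rcase_abs; intros; lra.
  - exists y. unfold is_RInt_gen, filterlimi, filter_le, filtermapi. intros P HP.
    assert (HyP := Hy P HP). unfold filtermap in HyP.
    apply filter_imp with (2 := filter_and _ _ Hd HyP).
    intros [a b] [[Hab D] HPab]. simpl in *. exists (RInt f a b). split; auto.
    apply (RInt_correct (V := R_CompleteNormedModule)). apply exRc. intros z Hz. rewrite Rmin_left, Rmax_right in Hz by lra. apply D; lra.
Qed.

Lemma exp_mono x y : x <= y -> exp x <= exp y.
Proof. intros H. destruct (Req_dec x y) as [E|E]; [subst; lra| apply Rlt_le, exp_increasing; lra]. Qed.

Lemma ln_le_id t : 0 < t -> ln t <= t.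
Proof. intros Ht. assert (H := exp_ineq1_le (ln t)). rewrite exp_ln in H by exact Ht. lra. Qed.

Lemma ln_ge0 t : 1 <= t -> 0 <= ln t.
Proof. intros Ht. rewrite <- ln_1. destruct (Req_dec 1 t) as [E|E]; [subst; lra| apply Rlt_le, ln_increasing; lra]. Qed.

Lemma lim_at_point (G : R -> R) a : filterlim G (at_point a) (locally (G a)).
Proof. intros P HP. unfold filtermap, at_point. apply locally_singleton. exact HP. Qed.

Lemma lim_pow0 (K r : R) : 0 < K -> 0 < r -> filterlim (fun t => K * exp (r * ln t)) (at_right 0) (locally 0).
Proof.
  intros HK Hr. apply filterlim_locally. intros eps.
  set (d := exp (ln (eps / K) / r)).
  assert (Hd : 0 < d) by apply exp_pos.
  exists (mkposreal d Hd). intros t Ht Ht0. simpl in Ht.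
  change (Rabs (t - 0) < d) in Ht. rewrite Rminus_0_r, Rabs_pos_eq in Ht by lra.
  change (Rabs (K * exp (r * ln t) - 0) < eps).
  assert (He : 0 < eps) by (destruct eps; simpl; lra).
  rewrite Rminus_0_r, Rabs_pos_eq by (apply Rmult_le_pos; [lra| apply Rlt_le, exp_pos]).
  assert (L1 : ln t < ln (eps / K) / r).
  { unfold d in Ht. rewrite <- (ln_exp (ln (eps / K) / r)). apply ln_increasing; lra. }
  assert (L2 : r * ln t < ln (eps / K)).
  { apply Rmult_lt_compat_l with (r := r) in L1; [|lra]. replace (r * (ln (eps / K) / r)) with (ln (eps / K)) in L1 by (field; lra). exact L1. }
  apply exp_increasing in L2. rewrite exp_ln in L2 by (apply Rdiv_lt_0_compat; lra).
  apply Rmult_lt_compat_l with (r := K) in L2; [|lra].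
  replace (K * (eps / K)) with (pos eps) in L2 by (field; lra). exact L2.
Qed.

Lemma lim_expm (C : R) : 0 < C -> filterlim (fun t => - C * exp (- t)) (Rbar_locally p_infty) (locally 0).
Proof.
  intros HC. apply filterlim_locally. intros eps.
  assert (He : 0 < eps) by (destruct eps; simpl; lra).
  exists (- ln (eps / C)). intros t Ht.
  change (Rabs (- C * exp (- t) - 0) < eps).
  rewrite Rminus_0_r, Rabs_left1 by (assert (0 < exp (-t)) by apply exp_pos; nra).
  assert (L2 : - t < ln (eps / C)) by lra.
  apply exp_increasing in L2. rewrite exp_ln in L2 by (apply Rdiv_lt_0_compat; lra).
  apply Rmult_lt_compat_l with (r := C) in L2; [|lra].
  replace (C * (eps / C)) with (pos eps) in L2 by (field; lra). lra.
Qed.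

Lemma fq_int_left q X : -1 < q -> ex_RInt_gen (fq q X) (at_right 0) (at_point 1).
Proof.
  intros Hq.
  set (K := exp (Rabs X) / (q + 1)).
  assert (HK : 0 < K) by (apply Rdiv_lt_0_compat; [apply exp_pos| lra]).
  apply (ex_RInt_gen_dom _ _ (at_right_proper_filter 0) (at_point_filter 1) (fq q X)
    (fun t => exp (Rabs X) * exp (q * ln t)) (fun t => K * exp ((q + 1) * ln t)) 0 (K * exp ((q + 1) * ln 1))).
  - apply (Filter_prod _ _ _ (fun a => 0 < a < 1) (fun b => b = 1)).
    + exists (mkposreal 1 Rlt_0_1). intros y Hy Hy0. change (Rabs (y - 0) < 1) in Hy.
      rewrite Rminus_0_r, Rabs_pos_eq in Hy by lra. lra.
    + reflexivity.
    + intros a b Ha Hb. simpl. subst b. split; [lra|]. intros x Hx.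
      assert (Hx0 : 0 < x) by lra.
      split; [apply fq_cont; lra|]. split.
      { apply (ex_derive_continuous (fun t => exp (Rabs X) * exp (q * ln t))). auto_derive. lra. }
      split.
      { auto_derive. lra. unfold K.
        replace ((q + 1) * ln x) with (q * ln x + ln x) by ring. rewrite exp_plus, exp_ln by lra. field. lra. }
      unfold fq. rewrite Rabs_pos_eq by (apply Rlt_le, Rmult_lt_0_compat; apply exp_pos).
      rewrite Rmult_comm. apply Rmult_le_compat_r; [apply Rlt_le, exp_pos|]. apply exp_mono.
      assert (Rabs (X * x) <= Rabs X) by (rewrite Rabs_mult, (Rabs_pos_eq x) by lra; assert (0 <= Rabs X) by apply Rabs_pos; nra).
      assert (- (X * x) <= Rabs (X * x)) by (rewrite <- Rabs_Ropp; apply Rle_abs).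
      nra.
  - apply lim_pow0; lra.
  - apply (lim_at_point (fun t => K * exp ((q + 1) * ln t)) 1).
Qed.

Lemma fq_int_right q X : ex_RInt_gen (fq q X) (at_point 1) (Rbar_locally p_infty).
Proof.
  set (A := Rabs q + Rabs X + 1). set (C := exp (A ^ 2 / 2)).
  assert (HC : 0 < C) by apply exp_pos.
  apply (ex_RInt_gen_dom _ _ (at_point_filter 1) (Rbar_locally_filter p_infty) (fq q X)
    (fun t => C * exp (- t)) (fun t => - C * exp (- t)) (- C * exp (- 1)) 0).
  - apply (Filter_prod _ _ _ (fun a => a = 1) (fun b => 1 < b)).
    + reflexivity.
    + exists 1. auto.
    + intros a b Ha Hb. simpl. subst a. split; [lra|]. intros x Hx.
      split; [apply fq_cont; lra|]. split.
      { apply (ex_derive_continuous (fun t => C * exp (- t))). auto_derive. auto. }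
      split.
      { auto_derive. auto. ring. }
      unfold fq. rewrite Rabs_pos_eq by (apply Rlt_le, Rmult_lt_0_compat; apply exp_pos).
      unfold C. rewrite <- !exp_plus. apply exp_mono.
      assert (L0 := ln_ge0 x ltac:(lra)). assert (L1 := ln_le_id x ltac:(lra)).
      assert (q * ln x <= Rabs q * x).
      { apply Rle_trans with (Rabs q * ln x). apply Rmult_le_compat_r; [lra| apply Rle_abs]. apply Rmult_le_compat_l; [apply Rabs_pos|lra]. }
      assert (- (X * x) <= Rabs X * x).
      { assert (-X <= Rabs X) by (rewrite <- Rabs_Ropp; apply Rle_abs). nra. }
      assert (Hsq : 0 <= (x - A) ^ 2) by apply pow2_ge_0. unfold A in Hsq |- *. nra.
  - apply (lim_at_point (fun t => - C * exp (- t)) 1).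
  - apply lim_expm; lra.
Qed.

Lemma fq_int q X : -1 < q -> ex_RInt_gen (fq q X) (at_right 0) (Rbar_locally p_infty).
Proof.
  intros Hq. apply (ex_RInt_gen_Chasles (Fa := at_right 0) (Fc := Rbar_locally p_infty) _ 1).
  apply fq_int_left; auto. apply fq_int_right.
Qed.

Definition J q X := RInt_gen (fq q X) (at_right 0) (Rbar_locally p_infty).

Lemma J_correct q X : -1 < q -> is_RInt_gen (fq q X) (at_right 0) (Rbar_locally p_infty) (J q X).
Proof.
  intros Hq. apply (RInt_gen_correct (V := R_CompleteNormedModule)). apply fq_int; auto.
Qed.

Lemma at_right0_ev : at_right 0 (fun a => 0 < a < 1).
Proof.
  exists (mkposreal 1 Rlt_0_1). intros y Hy Hy0. change (Rabs (y - 0) < 1) in Hy.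
  rewrite Rminus_0_r, Rabs_pos_eq in Hy by lra. lra.
Qed.

Lemma ev_pos (P : R -> Prop) : (forall x, 0 < x -> P x) ->
  filter_prod (at_right 0) (Rbar_locally p_infty) (fun ab => fst ab <= snd ab /\ forall x, fst ab <= x <= snd ab -> P x).
Proof.
  intros HP. apply (Filter_prod _ _ _ (fun a => 0 < a < 1) (fun b => 1 < b)).
  - apply at_right0_ev.
  - exists 1. auto.
  - intros a b Ha Hb. simpl. split; [lra|]. intros x Hx. apply HP. lra.
Qed.

Lemma fq_pointwise q X h x : 0 < x -> Rabs h <= 1 ->
  Rabs (fq q (X + h) x - fq q X x + h * fq (q + 1) X x) <= h ^ 2 * fq (q + 1 + 1) (- (Rabs X + 1)) x.
Proof.
  intros Hx Hh.
  rewrite (fq_succ (q+1)), (fq_succ q) by lra. rewrite fq_succ by lra.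
  unfold fq.
  set (P := exp (q * ln x)).
  assert (HP : 0 < P) by apply exp_pos.
  assert (E1 : exp (- x ^ 2 / 2 - (X + h) * x) = exp (- x ^ 2 / 2 - X * x) * exp (- (h * x))).
  { rewrite <- exp_plus. f_equal. ring. }
  rewrite E1.
  set (E := exp (- x ^ 2 / 2 - X * x)). assert (HE : 0 < E) by apply exp_pos.
  replace (P * (E * exp (- (h * x))) - P * E + h * (x * (P * E))) with ((P * E) * (exp (- (h * x)) - 1 - (- (h * x)))) by ring.
  rewrite Rabs_mult, (Rabs_pos_eq (P * E)) by nra.
  assert (B := exp_m1_id_bound (- (h * x))).
  assert (B2 : E * exp (Rabs (- (h * x))) <= exp (- x ^ 2 / 2 - - (Rabs X + 1) * x)).
  { unfold E. rewrite <- exp_plus. apply exp_mono. rewrite Rabs_Ropp, Rabs_mult, (Rabs_pos_eq x) by lra.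
    assert (-X <= Rabs X) by (rewrite <- Rabs_Ropp; apply Rle_abs). nra. }
  assert (0 <= (- (h * x)) ^ 2) by apply pow2_ge_0.
  assert (0 <= Rabs (exp (- (h * x)) - 1 - - (h * x))) by apply Rabs_pos.
  apply Rle_trans with (P * E * ((- (h * x)) ^ 2 * exp (Rabs (- (h * x))))).
  { apply Rmult_le_compat_l; nra. }
  replace (P * E * ((- (h * x)) ^ 2 * exp (Rabs (- (h * x))))) with ((P * h ^ 2 * x * x) * (E * exp (Rabs (- (h * x))))) by ring.
  replace (h ^ 2 * (x * (x * (P * exp (- x ^ 2 / 2 - - (Rabs X + 1) * x))))) with ((P * h ^ 2 * x * x) * exp (- x ^ 2 / 2 - - (Rabs X + 1) * x)) by ring.
  apply Rmult_le_compat_l; [|exact B2].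
  assert (0 <= h ^ 2) by apply pow2_ge_0. assert (0 <= P * h ^ 2) by nra. assert (0 <= P * h^2 * x) by nra. nra.
Qed.

Lemma J_bound q X h : -1 < q -> Rabs h <= 1 ->
  Rabs (J q (X + h) - J q X + h * J (q + 1) X) <= h ^ 2 * J (q + 1 + 1) (- (Rabs X + 1)).
Proof.
  intros Hq Hh.
  assert (I1 := J_correct q (X + h) Hq). assert (I2 := J_correct q X Hq).
  assert (I3 := J_correct (q + 1) X ltac:(lra)). assert (I4 := J_correct (q + 1 + 1) (- (Rabs X + 1)) ltac:(lra)).
  assert (Ic := is_RInt_gen_plus _ _ _ _ (is_RInt_gen_minus _ _ _ _ I1 I2) (is_RInt_gen_scal _ h _ I3)).
  assert (Ib := is_RInt_gen_scal _ (h ^ 2) _ I4).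
  refine (RInt_gen_norm (V := R_CompleteNormedModule) _ _ _ _ _ _ Ic Ib).
  - apply filter_imp with (2 := ev_pos (fun _ => True) (fun _ _ => I)). intros ab [H _]. exact H.
  - apply filter_imp with (2 := ev_pos _ (fun x Hx => fq_pointwise q X h x Hx Hh)). intros ab [_ H]. exact H.
Qed.

Lemma J_deriv q X : -1 < q -> is_derive (J q) X (- J (q + 1) X).
Proof.
  intros Hq. apply is_derive_Reals. intros eps Heps.
  set (K := J (q + 1 + 1) (- (Rabs X + 1))).
  assert (HK : 0 <= Rabs K) by apply Rabs_pos.
  assert (Hd : 0 < Rmin 1 (eps / (Rabs K + 1))) by (apply Rmin_pos; [lra| apply Rdiv_lt_0_compat; lra]).
  exists (mkposreal _ Hd). intros h Hh0 Hhd. simpl in Hhd.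
  assert (Hh1 : Rabs h <= 1) by (apply Rlt_le, Rlt_le_trans with (1 := Hhd), Rmin_l).
  assert (Hh2 : Rabs h < eps / (Rabs K + 1)) by (apply Rlt_le_trans with (1 := Hhd), Rmin_r).
  assert (B := J_bound q X h Hq Hh1). fold K in B.
  assert (Hah : 0 < Rabs h) by (apply Rabs_pos_lt; exact Hh0).
  replace ((J q (X + h) - J q X) / h - - J (q + 1) X) with ((J q (X + h) - J q X + h * J (q + 1) X) / h) by (field; exact Hh0).
  unfold Rdiv. rewrite Rabs_mult, Rabs_inv.
  apply Rle_lt_trans with (h ^ 2 * Rabs K * / Rabs h).
  { apply Rmult_le_compat_r. apply Rlt_le, Rinv_0_lt_compat; lra.
    apply Rle_trans with (1 := B). apply Rmult_le_compat_l. apply pow2_ge_0. apply Rle_abs. }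
  replace (h ^ 2) with (Rabs h * Rabs h) by (rewrite <- Rabs_mult; rewrite Rabs_pos_eq by nra; ring).
  replace (Rabs h * Rabs h * Rabs K * / Rabs h) with (Rabs h * Rabs K) by (field; lra).
  apply Rmult_lt_compat_r with (r := Rabs K + 1) in Hh2; [|lra].
  replace (eps / (Rabs K + 1) * (Rabs K + 1)) with eps in Hh2 by (field; lra).
  nra.
Qed.

Lemma at_right0_ev' u : 0 < u -> at_right 0 (fun a => 0 < a < u).
Proof.
  intros Hu. exists (mkposreal u Hu). intros y Hy Hy0. change (Rabs (y - 0) < u) in Hy.
  rewrite Rminus_0_r, Rabs_pos_eq in Hy by lra. lra.
Qed.

Lemma RIntgen_pos (h : R -> R) l :
  is_RInt_gen h (at_right 0) (Rbar_locally p_infty) l ->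
  (forall t, 0 < t -> continuous h t) -> (forall t, 0 < t -> 0 <= h t) ->
  forall u v, 0 < u < v -> (forall t, u < t < v -> 0 < h t) -> 0 < l.
Proof.
  intros Hl Hc Hp u v Huv Hpos.
  assert (Hm : 0 < RInt h u v).
  { apply RInt_gt_0; try lra; auto. intros x Hx. apply Hc. lra. }
  destruct (Rle_or_lt (RInt h u v) l) as [Hle|Hlt]; [lra|].
  exfalso.
  assert (He : 0 < RInt h u v - l) by lra.
  assert (HB : locally l (ball l (mkposreal _ He))) by apply locally_ball.
  assert (H1 := Hl _ HB). unfold filtermapi in H1.
  assert (H2 : filter_prod (at_right 0) (Rbar_locally p_infty) (fun ab => 0 < fst ab < u /\ v < snd ab)).
  { apply (Filter_prod _ _ _ (fun a => 0 < a < u) (fun b => v < b)).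
    apply at_right0_ev'; lra. exists v; auto. intros; simpl; auto. }
  assert (FP : ProperFilter (filter_prod (at_right 0) (Rbar_locally p_infty))).
  { apply filter_prod_proper; try apply at_right_proper_filter; try apply Rbar_locally_filter. }
  destruct (@filter_ex _ _ FP _ (filter_and _ _ H1 H2)) as [[a b] [[y [Hy Hby]] [Ha Hb]]].
  simpl in *.
  change (Rabs (y - l) < RInt h u v - l) in Hby.
  apply (is_RInt_unique (V := R_CompleteNormedModule)) in Hy.
  assert (ex : forall s s', 0 < s -> s <= s' -> ex_RInt h s s').
  { intros s s' Hs Hss. apply exRc. intros z Hz. rewrite Rmin_left, Rmax_right in Hz by lra. apply Hc. lra. }
  assert (C1 := RInt_Chasles h a u b (ex a u ltac:(lra) ltac:(lra)) (ex u b ltac:(lra) ltac:(lra))).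
  assert (C2 := RInt_Chasles h u v b (ex u v ltac:(lra) ltac:(lra)) (ex v b ltac:(lra) ltac:(lra))).
  change (RInt h a u + RInt h u b = RInt h a b) in C1.
  change (RInt h u v + RInt h v b = RInt h u b) in C2.
  assert (P1 : 0 <= RInt h a u) by (apply RInt_ge_0; [lra| apply ex; lra| intros; apply Hp; lra]).
  assert (P2 : 0 <= RInt h v b) by (apply RInt_ge_0; [lra| apply ex; lra| intros; apply Hp; lra]).
  revert Hby. unfold Rabs. destruct Rcase_abs; intros; lra.
Qed.

Lemma J_pos q X : -1 < q -> 0 < J q X.
Proof.
  intros Hq. apply (RIntgen_pos (fq q X) _ (J_correct q X Hq)) with (u := 1) (v := 2).
  - intros; apply fq_cont; auto.
  - intros; apply Rlt_le, fq_pos.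
  - lra.
  - intros; apply fq_pos.
Qed.

Lemma J_CS q X : -1 < q -> J (q + 1) X ^ 2 < J q X * J (q + 1 + 1) X.
Proof.
  intros Hq.
  assert (P0 := J_pos q X Hq).
  set (lam := J (q + 1) X / J q X).
  assert (I1 := J_correct q X Hq). assert (I2 := J_correct (q + 1) X ltac:(lra)).
  assert (I3 := J_correct (q + 1 + 1) X ltac:(lra)).
  assert (Ic := is_RInt_gen_plus _ _ _ _ (is_RInt_gen_minus _ _ _ _ I3 (is_RInt_gen_scal _ (2 * lam) _ I2)) (is_RInt_gen_scal _ (lam ^ 2) _ I1)).
  assert (Ic' : is_RInt_gen (fun t => fq q X t * (t - lam) ^ 2) (at_right 0) (Rbar_locally p_infty)
     (J (q + 1 + 1) X - 2 * lam * J (q + 1) X + lam ^ 2 * J q X)).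
  { eapply is_RInt_gen_ext; [ | exact Ic].
    apply (Filter_prod _ _ _ (fun a => 0 < a < 1) (fun b => 1 < b)).
    apply at_right0_ev. exists 1; auto.
    intros a b Ha Hb x Hx. simpl in Hx. rewrite Rmin_left, Rmax_right in Hx by lra.
    change (fq (q + 1 + 1) X x - 2 * lam * fq (q + 1) X x + lam ^ 2 * fq q X x = fq q X x * (x - lam) ^ 2).
    rewrite (fq_succ (q + 1)), fq_succ by lra. ring. }
  assert (Hpos : 0 < J (q + 1 + 1) X - 2 * lam * J (q + 1) X + lam ^ 2 * J q X).
  { apply (RIntgen_pos _ _ Ic') with (u := Rabs lam + 1) (v := Rabs lam + 2).
    - intros t Ht. apply (continuous_mult (fun t => fq q X t) (fun t => (t - lam) ^ 2)).
      apply fq_cont; auto.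
      apply (ex_derive_continuous (fun t => (t - lam) ^ 2)). auto_derive. auto.
    - intros t Ht. apply Rmult_le_pos. apply Rlt_le, fq_pos. apply pow2_ge_0.
    - assert (0 <= Rabs lam) by apply Rabs_pos. lra.
    - intros t Ht. apply Rmult_lt_0_compat. apply fq_pos.
      assert (lam <= Rabs lam) by apply Rle_abs. assert (0 < t - lam) by lra. nra. }
  assert (E : lam * J q X = J (q + 1) X) by (unfold lam; field; lra).
  apply Rmult_lt_compat_l with (r := J q X) in Hpos; [|lra].
  nra.
Qed.

Lemma comp_der q c0 k m y : -1 < q ->
  is_derive (fun y => c0 * J q (- k * y + m)) y (c0 * k * J (q + 1) (- k * y + m)).
Proof.
  intros Hq.
  assert (D1 := is_derive_comp (J q) (fun y => - k * y + m) y _ (- k) (J_deriv q (- k * y + m) Hq)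
                 ltac:(auto_derive; auto; ring)).
  assert (D2 := is_derive_scal _ _ c0 _ D1).
  replace (c0 * k * J (q + 1) (- k * y + m)) with (c0 * scal (- k) (- J (q + 1) (- k * y + m))).
  exact D2.
  unfold scal; simpl; unfold mult; simpl. ring.
Qed.

Lemma psi_eq a b sigma rho y : 0 < b -> 0 < sigma ->
  psi a b sigma rho y =
  / Gamma_fun (- (- rho / b)) * J (- (- rho / b) - 1)
     (- (sqrt (2 * b) / sigma) * y + a * sqrt (2 * b) / (sigma * b)).
Proof.
  intros Hb Hs.
  unfold psi, Dpc.
  assert (Hsq : sqrt (2 * b) * sqrt (2 * b) = 2 * b) by (apply sqrt_sqrt; lra).
  assert (EX : - (b * y - a) / (sigma * b) * sqrt (2 * b) = - (sqrt (2 * b) / sigma) * y + a * sqrt (2 * b) / (sigma * b)).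
  { field. split; lra. }
  assert (Eexp : exp ((b * y - a) ^ 2 / (2 * sigma ^ 2 * b)) * exp (- (- (b * y - a) / (sigma * b) * sqrt (2 * b)) ^ 2 / 4) = 1).
  { rewrite <- exp_plus. rewrite <- exp_0. f_equal.
    replace ((- (b * y - a) / (sigma * b) * sqrt (2 * b)) ^ 2) with ((b * y - a) ^ 2 / (sigma * b) ^ 2 * (sqrt (2 * b) * sqrt (2 * b))) by (field; split; lra).
    rewrite Hsq. field. split; lra. }
  change (RInt_gen (fun t => Rpower t (- (- rho / b) - 1) * exp (- t ^ 2 / 2 - - (b * y - a) / (sigma * b) * sqrt (2 * b) * t)) (at_right 0) (Rbar_locally p_infty))
    with (J (- (- rho / b) - 1) (- (b * y - a) / (sigma * b) * sqrt (2 * b))).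
  rewrite <- EX.
  transitivity ((exp ((b * y - a) ^ 2 / (2 * sigma ^ 2 * b)) * exp (- (- (b * y - a) / (sigma * b) * sqrt (2 * b)) ^ 2 / 4)) * / Gamma_fun (- (- rho / b)) * J (- (- rho / b) - 1) (- (b * y - a) / (sigma * b) * sqrt (2 * b))).
  unfold Rdiv; ring. rewrite Eexp. ring.
Qed.

Theorem lemma4p5 (a b sigma rho c x0 xinf : R)
  (hb : 0 < b) (hsigma : 0 < sigma) (hrho : 0 < rho) (hc : 0 < c)
  (hx0 : c < x0) (hx0eq : eq_x0 a b sigma rho c x0)
  (hx0uniq : forall x, c < x -> eq_x0 a b sigma rho c x -> x = x0)
  (hxinf : c < xinf) (hxinfeq : eq_xinf a b sigma rho c xinf)
  (hxinfuniq : forall x, c < x -> eq_xinf a b sigma rho c x -> x = xinf) :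
  xinf < x0.
Proof.
  set (p := - (- rho / b) - 1).
  set (g := / Gamma_fun (- (- rho / b))).
  set (k := sqrt (2 * b) / sigma).
  set (m := a * sqrt (2 * b) / (sigma * b)).
  assert (hp : -1 < p).
  { unfold p. assert (0 < rho / b) by (apply Rdiv_lt_0_compat; lra).
    replace (- (- rho / b)) with (rho / b) by (field; lra). lra. }
  assert (hk : 0 < k) by (unfold k; apply Rdiv_lt_0_compat; [apply sqrt_lt_R0; lra| lra]).
  assert (Epsi : forall y, psi a b sigma rho y = g * J p (- k * y + m)).
  { intros y. apply psi_eq; auto. }
  assert (D1 : forall y, Derive (psi a b sigma rho) y = g * k * J (p + 1) (- k * y + m)).
  { intros y. rewrite (Derive_ext _ _ y Epsi). apply is_derive_unique. apply comp_der; auto. }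
  assert (D2 : forall y, Derive (fun z => Derive (psi a b sigma rho) z) y = g * k * k * J (p + 1 + 1) (- k * y + m)).
  { intros y. transitivity (Derive (fun z => g * k * J (p + 1) (- k * z + m)) y).
    apply Derive_ext. exact D1. apply is_derive_unique. apply (comp_der (p + 1) (g * k)). lra. }
  destruct (Req_dec g 0) as [Hg0|Hg0].
  - exfalso. assert (E := hx0uniq (x0 + 1) ltac:(lra)).
    assert (x0 + 1 = x0); [|lra]. apply E. unfold eq_x0. rewrite D1, Epsi, Hg0. ring.
  - set (Z := fun y => - k * y + m).
    set (H := fun y => (y - c) * (g * k * k * J (p + 1 + 1) (Z y)) - g * k * J (p + 1) (Z y)).
    assert (Hxinf : forall y, eq_xinf a b sigma rho c y <-> H y = 0).
    { intros y. unfold eq_xinf, H, Z. rewrite D1, D2. tauto. }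
    assert (Hx0 : (x0 - c) * k * J (p + 1) (Z x0) = J p (Z x0)).
    { unfold eq_x0 in hx0eq. rewrite D1, Epsi in hx0eq. unfold Z.
      apply Rmult_eq_reg_l with g; auto. lra. }
    assert (P0 := J_pos p (Z x0) hp). assert (P1 := J_pos (p + 1) (Z x0) ltac:(lra)).
    assert (P1c := J_pos (p + 1) (Z c) ltac:(lra)).
    assert (CS := J_CS p (Z x0) hp).
    assert (S : 0 < (x0 - c) * k * J (p + 1 + 1) (Z x0) - J (p + 1) (Z x0)).
    { apply Rmult_lt_reg_l with (J (p + 1) (Z x0)); auto. rewrite Rmult_0_r.
      replace (J (p + 1) (Z x0) * ((x0 - c) * k * J (p + 1 + 1) (Z x0) - J (p + 1) (Z x0)))
        with (((x0 - c) * k * J (p + 1) (Z x0)) * J (p + 1 + 1) (Z x0) - J (p + 1) (Z x0) ^ 2) by ring.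
      rewrite Hx0. lra. }
    assert (Hx0v : H x0 = g * k * ((x0 - c) * k * J (p + 1 + 1) (Z x0) - J (p + 1) (Z x0))) by (unfold H; ring).
    assert (Hcv : H c = - (g * k * J (p + 1) (Z c))) by (unfold H; ring).
    assert (Hcont : continuity H).
    { intros y. apply continuity_pt_filterlim. apply (ex_derive_continuous H).
      unfold H. apply (ex_derive_minus (fun y => (y - c) * (g * k * k * J (p + 1 + 1) (Z y))) (fun y => g * k * J (p + 1) (Z y))).
      - apply (ex_derive_mult (fun y => y - c) (fun y => g * k * k * J (p + 1 + 1) (Z y))).
        + auto_derive. auto.
        + eexists. unfold Z. apply comp_der. lra.
      - eexists. unfold Z. apply comp_der. lra. }
    assert (Hz : exists z, c <= z <= x0 /\ H z = 0).
    { assert (PJ : 0 < k * J (p + 1) (Z c)) by (apply Rmult_lt_0_compat; auto).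
      assert (PS : 0 < k * ((x0 - c) * k * J (p + 1 + 1) (Z x0) - J (p + 1) (Z x0))) by (apply Rmult_lt_0_compat; auto).
      rewrite Rmult_assoc in Hcv, Hx0v.
      destruct (Rlt_or_le 0 g) as [Hgp|Hgn].
      - assert (A1 : H c < 0) by (rewrite Hcv; assert (0 < g * (k * J (p + 1) (Z c))) by (apply Rmult_lt_0_compat; auto); lra).
        assert (A2 : 0 < H x0) by (rewrite Hx0v; apply Rmult_lt_0_compat; auto).
        destruct (IVT H c x0 Hcont hx0 A1 A2) as [z [Hz1 Hz2]].
        exists z; auto.
      - assert (Hgn' : g < 0) by lra.
        assert (A1 : (- H)%F c < 0).
        { unfold opp_fct. rewrite Hcv. assert (0 < - g * (k * J (p + 1) (Z c))) by (apply Rmult_lt_0_compat; auto; lra). lra. }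
        assert (A2 : 0 < (- H)%F x0).
        { unfold opp_fct. rewrite Hx0v. assert (0 < - g * (k * ((x0 - c) * k * J (p + 1 + 1) (Z x0) - J (p + 1) (Z x0)))) by (apply Rmult_lt_0_compat; auto; lra). lra. }
        destruct (IVT (- H)%F c x0 (continuity_opp _ Hcont) hx0 A1 A2) as [z [Hz1 Hz2]].
        exists z. unfold opp_fct in Hz2. split; auto. lra. }
    destruct Hz as [z [Hzr Hz0]].
    assert (Hzc : z <> c).
    { intros ->. rewrite Hcv in Hz0. assert (g * k * J (p + 1) (Z c) <> 0); [|lra].
      apply Rmult_integral_contrapositive_currified; [apply Rmult_integral_contrapositive_currified|]; lra. }
    assert (Hzx0 : z <> x0).
    { intros ->. rewrite Hx0v in Hz0.
      apply (Rmult_integral_contrapositive_currified (g * k)) in Hz0; [lra| |lra].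
      apply Rmult_integral_contrapositive_currified; lra. }
    assert (Ez := hxinfuniq z ltac:(lra) (proj2 (Hxinf z) Hz0)). lra.
Qed.
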